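(* For any eviction algorithm $\mathcal Q$ and any input (for randomized $\mathcal Q$: any realization of its random bits) there exists an eviction graph $H_{\mathcal Q}$ with edge set $E$ and a coloring of its edges such that: (1) if two edges $(i,j)$ and $(i',j')$ have the same color then $i=i'$; (2) if two distinct edges $(i,j)$ and $(i,j')$ have the same color then the evictions of $\sigma(j)$ and $\sigma(j')$ do not overlap; (3) the number of colors used is at most $\mathrm{OPT}$; and moreover $\mathrm{OBJ}_{\mathcal Q}\le\mathrm{OPT}+|E|$.
   Context: Caching setting: cache of capacity $k$, requests $\sigma(1),\dots,\sigma(T)$ processed online from an empty cache; on a miss with full cache one cached page is evicted. $\mathrm{OBJ}_{\mathcal Q}$ = number of misses of $\mathcal Q$, $\mathrm{OPT}$ = number of misses of Belady's optimal offline algorithm. $\nu(t)=\min\{s>t:\sigma(s)=\sigma(t)\}$ ($T+1$ if none). Cached pages are identified by the index of their most recent request: $\mathcal I_{\mathcal Q}(t)$ is the set of indices $\max\{t'\le t:\sigma(t')=s\}$ over pages $s$ cached after processing request $t$; ''the eviction of $\sigma(j)$'' means the (unique) time at which $\mathcal Q$ evicts the page $\sigma(j)$ while $j$ is its index in $\mathcal I_{\mathcal Q}$. Two evictions, of $\sigma(j)$ at time $t_1$ and of $\sigma(j')$ at time $t_2>t_1$, do not overlap if $\nu(j)\le t_2$ (i.e. the eviction triggered by the first one, at time $\nu(j)$, happens no later than the second). An eviction graph $H_{\mathcal Q}$ is a directed graph on vertex set $\{1,\dots,T\}$ such that for every edge $(i,j)$ there is a time $t+1$ at which $\mathcal Q$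 evicts $\sigma(j)$ with $j\in\mathcal I_{\mathcal Q}(t)$ while $i\in\mathcal I_{\mathcal Q}(t)$ and $\nu(i)>\nu(j)$; moreover for each $j$ there is at most one edge of the form $(i,j)$. *)

(* Defs.v *)
From mathcomp Require Import all_boot.
From mathcomp Require Import finmap.
Set Implicit Arguments. Unset Strict Implicit. Unset Printing Implicit Defensive.
Local Open Scope fset_scope.

(* Pages are natural numbers.  A request sequence is sigma : nat -> nat,
   of which only sigma 1, ..., sigma T are relevant (times are 1..T).
   A cache state is a finite set of pages. *)

Definition valid_step (k p : nat) (C C' : {fset nat}) : Prop :=
  if p \in C then C' = C
  else if (#|` C| < k)%N then C' = p |` C
  else exists2 q, q \in C & C' = p |` (C `\ q).

(* A run (execution) of an eviction algorithm on sigma(1..T): C t is the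
   cache content after processing request t, starting from the empty cache.
   Every run of any (deterministic, or randomized with fixed random bits)
   eviction algorithm is such a run. *)
Definition valid_run (k T : nat) (sigma : nat -> nat) (C : nat -> {fset nat}) : Prop :=
  C 0%N = fset0 /\
  forall t, (1 <= t <= T)%N -> valid_step k (sigma t) (C t.-1) (C t).

Definition misses (T : nat) (sigma : nat -> nat) (C : nat -> {fset nat}) : nat :=
  count (fun t => sigma t \notin C t.-1) (iota 1 T).

Definition is_OPT (k T : nat) (sigma : nat -> nat) (m : nat) : Prop :=
  (exists2 C, valid_run k T sigma C & misses T sigma C = m) /\
  (forall C, valid_run k T sigma C -> (m <= misses T sigma C)%N).

(* nu(t) = min { s > t : sigma s = sigma t }  (s <= T), or T+1 if none. *)
Definition nu (T : nat) (sigma : nat -> nat) (t : nat) : nat :=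
  (t.+1 + find (fun s => sigma s == sigma t) (iota t.+1 (T - t)))%N.

(* j \in I_Q(t): j is the index of the most recent request (up to t) of a page
   cached after processing request t. *)
Definition inI (sigma : nat -> nat) (C : nat -> {fset nat}) (t j : nat) : bool :=
  [&& (1 <= j <= t)%N, sigma j \in C t &
      all (fun s => sigma s != sigma j) (iota j.+1 (t - j))].

(* "the eviction of sigma(j)" happens at time u: at time u the page sigma(j)
   is evicted while j is its index in I_Q(u-1). *)
Definition evicted_at (T : nat) (sigma : nat -> nat) (C : nat -> {fset nat})
    (j u : nat) : bool :=
  [&& (1 <= u <= T)%N, sigma j \in C u.-1, sigma j \notin C u & inI sigma C u.-1 j].

Definition no_overlap (T : nat) (sigma : nat -> nat) (C : nat -> {fset nat})
    (j j' : nat) : Prop :=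
  forall u1 u2, evicted_at T sigma C j u1 -> evicted_at T sigma C j' u2 ->
    ((u1 < u2)%N -> (nu T sigma j <= u2)%N) /\
    ((u2 < u1)%N -> (nu T sigma j' <= u1)%N).

Definition eviction_edge (T : nat) (sigma : nat -> nat) (C : nat -> {fset nat})
    (e : nat * nat) : Prop :=
  exists u, [/\ evicted_at T sigma C e.2 u, inI sigma C u.-1 e.1 &
               (nu T sigma e.2 < nu T sigma e.1)%N].

Definition eviction_graph (T : nat) (sigma : nat -> nat) (C : nat -> {fset nat})
    (E : seq (nat * nat)) : Prop :=
  [/\ uniq E,
      forall e, e \in E -> [&& 1 <= e.1 <= T & 1 <= e.2 <= T]%N,
      forall e, e \in E -> eviction_edge T sigma C e &
      forall e e', e \in E -> e' \in E -> e.2 = e'.2 -> e = e'].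

(* Main.v *)
Require Import Defs.
From mathcomp Require Import all_boot.
From mathcomp Require Import finmap.
From mathcomp Require Import zify.
Set Implicit Arguments. Unset Strict Implicit. Unset Printing Implicit Defensive.
Local Open Scope fset_scope.
Local Open Scope nat_scope.

Section Basic.
Variables (k T : nat) (sigma : nat -> nat).

Definition seen t z := has (fun s => sigma s == z) (iota 1 t).
Fixpoint lastidx t z := if t is t'.+1 then (if sigma t'.+1 == z then t'.+1 else lastidx t' z) else 0.
Definition next t z := (t.+1 + find (fun s => sigma s == z) (iota t.+1 (T - t)))%N.

Lemma nuE j : nu T sigma j = next j (sigma j).
Proof. by []. Qed.

Lemma seenS t z : seen t.+1 z = seen t z || (sigma t.+1 == z).
Proof. by rewrite /seen -[t.+1]addn1 iotaD has_cat /= orbF add1n addn1. Qed.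

Lemma next_step t z : t < T -> sigma t.+1 != z -> next t z = next t.+1 z.
Proof.
move=> tT nz; rewrite /next.
have -> : (T - t = (T - t.+1).+1)%N by lia.
cbn [iota find]; rewrite (negbTE nz); lia.
Qed.

Lemma next_hit t : t < T -> next t (sigma t.+1) = t.+1.
Proof.
move=> tT; rewrite /next.
have -> : (T - t = (T - t.+1).+1)%N by lia.
by cbn [iota find]; rewrite eqxx addn0.
Qed.

Lemma next_gt t z : t < next t z.
Proof. rewrite /next; lia. Qed.

Lemma next_eq t z : t < T -> next t z = t.+1 -> sigma t.+1 = z.
Proof.
move=> tT; rewrite /next.
have -> : (T - t = (T - t.+1).+1)%N by lia.
rewrite /=; case: eqP => // _; lia.
Qed.

Lemma next_neq t z : t < T -> sigma t.+1 != z -> t.+1 < next t z.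
Proof.
move=> tT nz; have := next_gt t z; have : next t z <> t.+1.
  by move=> /(next_eq tT) E; rewrite E eqxx in nz.
lia.
Qed.

Lemma lastidx_step t z : sigma t.+1 != z -> lastidx t.+1 z = lastidx t z.
Proof. by move=> /= /negbTE ->. Qed.

Lemma lastidx_props t z : seen t z ->
  [/\ 1 <= lastidx t z <= t, sigma (lastidx t z) = z &
      all (fun s => sigma s != sigma (lastidx t z)) (iota (lastidx t z).+1 (t - lastidx t z))].
Proof.
elim: t => [|t IH] //; rewrite seenS /=.
case: eqP => [E _|ne /= Hs].
  split; [lia|by []|]; by have -> : (t.+1 - t.+1 = 0)%N by lia.
rewrite orbF in Hs; have [H1 H2 H3] := IH Hs; split=> //; first lia.
have -> : (t.+1 - lastidx t z = (t - lastidx t z).+1)%N by lia.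
rewrite -[(_ - lastidx t z).+1]addn1 iotaD all_cat H3 /= andbT H2.
have -> : ((lastidx t z).+1 + (t - lastidx t z) = t.+1)%N by lia.
by apply/eqP.
Qed.

Lemma next_lastidx t z : t <= T -> seen t z -> next (lastidx t z) z = next t z.
Proof.
elim: t => [|t IH] //; rewrite seenS => tT.
case: (eqVneq (sigma t.+1) z) => [E _|ne Hs].
  by rewrite /= E eqxx.
rewrite orbF in Hs; rewrite lastidx_step // IH //; last lia.
by rewrite next_step.
Qed.

Lemma nu_lastidx t z : t <= T -> seen t z -> nu T sigma (lastidx t z) = next t z.
Proof.
move=> tT Hs; rewrite nuE.
by have [_ -> _] := lastidx_props Hs; apply: next_lastidx.
Qed.

Lemma inI_lastidx (D : nat -> {fset nat}) t z : seen t z -> z \in D t ->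
  inI sigma D t (lastidx t z).
Proof.
move=> Hs Hz; have [H1 H2 H3] := lastidx_props Hs.
by rewrite /inI H1 H2 Hz -{1}H2.
Qed.

End Basic.

Section Runs.
Variables (k T : nat) (sigma : nat -> nat) (D : nat -> {fset nat}).
Hypothesis HD : valid_run k T sigma D.

Lemma vstep_cases p c c' : valid_step k p c c' ->
  [\/ p \in c /\ c' = c,
      [/\ p \notin c, (#|` c| < k)%N & c' = p |` c] |
      exists q, [/\ p \notin c, ~~ (#|` c| < k)%N, q \in c & c' = p |` (c `\ q)]].
Proof.
rewrite /valid_step; case: ifP => Hp; first by move=> ->; apply: Or31.
case: ifP => Hk; first by move=> ->; apply: Or32; split => //; rewrite Hp.
by case=> q Hq ->; apply: Or33; exists q; split => //; rewrite ?Hp ?Hk.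
Qed.

Lemma run_step t : t < T -> valid_step k (sigma t.+1) (D t) (D t.+1).
Proof. by move=> tT; case: HD => _ H; apply: (H t.+1); lia. Qed.

Lemma run_in t : t < T -> sigma t.+1 \in D t.+1.
Proof.
move=> tT; case: (vstep_cases (run_step tT)) => [[H ->]|[_ _ ->]|[q [_ _ _ ->]]] //;
by rewrite in_fset1U eqxx.
Qed.



Lemma run_seen t z : t <= T -> z \in D t -> seen sigma t z.
Proof.
elim: t => [|t IH] tT; first by case: HD => -> _; rewrite inE.
rewrite seenS; have tT' : t <= T by lia.
case: (vstep_cases (run_step tT)) => [[H ->]|[_ _ ->]|[q [_ _ _ ->]]].
- by move=> /(IH tT') ->.
- by rewrite in_fset1U => /orP[/eqP->|/(IH tT') ->]; rewrite ?eqxx ?orbT.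
- by rewrite in_fset1U in_fsetD1 => /orP[/eqP->|/andP[_ /(IH tT') ->]]; rewrite ?eqxx ?orbT.
Qed.

Lemma run_full t z : t <= T -> (#|` D t| < k)%N -> seen sigma t z -> z \in D t.
Proof.
elim: t => [|t IH] tT //; rewrite seenS.
case: (vstep_cases (run_step tT)) => [[H ->]|[Hp Hk ->]|[q [Hp Hk Hq ->]]].
- move=> Hk /orP[Hs|/eqP<-] //; apply: IH => //; lia.
- rewrite cardfsU1 Hp in_fset1U => Hk' /orP[Hs|/eqP->]; rewrite ?eqxx //.
  by rewrite IH ?orbT //; lia.
- move=> Hk'; exfalso; move: Hk'; rewrite cardfsU1 in_fsetD1 (negbTE Hp) andbF /=.
  have := cardfsD1 q (D t); rewrite Hq /=; move: Hk; rewrite -leqNgt.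
  set a := #|` D t|; set b := #|` D t `\ q|. lia.
Qed.

Lemma run_enter a b z : z \notin D a -> z \in D b -> a <= b -> b <= T ->
  exists s, [/\ a < s, s <= b & sigma s = z].
Proof.
elim: b => [|b IH] Ha Hb ab bT.
  have a0 : a = 0 by lia.
  by subst a; rewrite Hb in Ha.
case: (eqVneq a b.+1) => [E|ne]; first by subst; rewrite Hb in Ha.
case Hzb: (z \in D b).
  have ab' : a <= b by lia.
  have bT' : b <= T by lia.
  have [s [H1 H2 H3]] := IH Ha Hzb ab' bT'.
  by exists s; split => //; lia.
exists b.+1; split=> //; first lia.
move: Hb; case: (vstep_cases (run_step bT)) => [[H ->]|[_ _ ->]|[q [_ _ _ ->]]].
- by rewrite Hzb.
- by rewrite in_fset1U Hzb orbF => /eqP.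
- by rewrite in_fset1U in_fsetD1 Hzb andbF orbF => /eqP.
Qed.

Lemma missesS t : misses t.+1 sigma D = (misses t sigma D + (sigma t.+1 \notin D t))%N.
Proof. by rewrite /misses -[t.+1]addn1 iotaD count_cat /= addn0 add1n addn1. Qed.

Lemma evicted_uniq j u1 u2 : evicted_at T sigma D j u1 -> evicted_at T sigma D j u2 -> u1 = u2.
Proof.
wlog le: u1 u2 / u1 <= u2.
  move=> W H1 H2; case: (leqP u1 u2) => h; first exact: W h H1 H2.
  by symmetry; apply: W H2 H1; lia.
rewrite /evicted_at => /and4P[/andP[a1 b1] c1 d1 e1] /and4P[/andP[a2 b2] c2 d2 e2].
case: (eqVneq u1 u2) => // ne; exfalso.
have h1 : u1 <= u2.-1 by lia.
have h2 : u2.-1 <= T by lia.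
have [s [s1 s2 s3]] := run_enter d1 c2 h1 h2.
move: e2 e1; rewrite /inI => /and3P[/andP[j1 j2] _ /allP A] /and3P[/andP[j3 j4] _ _].
have : s \in iota j.+1 (u2.-1 - j) by rewrite mem_iota; lia.
by move=> /A; rewrite s3 eqxx.
Qed.

End Runs.

Definition upd {A : eqType} {B : Type} (f : A -> B) (a : A) (b : B) :=
  fun x => if x == a then b else f x.

Lemma updE {A : eqType} {B : Type} (f : A -> B) a b x :
  upd f a b x = if x == a then b else f x.
Proof. by []. Qed.

Lemma count_rem (P : pred (nat * nat)) a s : a \in s -> count P s = (P a + count P (rem a s))%N.
Proof. by move=> H; rewrite (permP (perm_to_rem H)). Qed.

Lemma mem_build (f : nat * nat -> nat) M olds L z : perm_eq M (olds ++ L) -> uniq (map f M) ->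
  (z \in map f L) = (z \in map f M) && (z \notin map f olds).
Proof.
move=> P U; have P' := perm_map f P; rewrite (perm_mem P') map_cat mem_cat.
have := U; rewrite (perm_uniq P') map_cat cat_uniq => /and3P[_ /hasPn H _].
case Hz: (z \in map f L); last by rewrite orbF andbN.
by rewrite orbT (negbTE (H _ Hz)).
Qed.

Lemma uniq_build (f : nat * nat -> nat) M olds L news : perm_eq M (olds ++ L) -> uniq (map f M) ->
  uniq (map f news) -> (forall z, z \in map f news -> z \notin map f L) -> uniq (map f (news ++ L)).
Proof.
move=> P U Un H; rewrite map_cat cat_uniq Un /=.
have := U; rewrite (perm_uniq (perm_map f P)) map_cat cat_uniq => /and3P[_ _ ->].
by rewrite andbT; apply/hasPn => z Hz; apply/negP => /H; rewrite Hz.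
Qed.

Lemma fst_uniq_pair (M : seq (nat * nat)) (x y y' : nat) : uniq (map fst M) -> (x, y) \in M -> (x, y') \in M -> y = y'.
Proof.
elim: M => // [[a b] M IH] /= /andP[Ha U]; rewrite !inE.
case: (eqVneq (x, y) (a, b)) => [[E1 E2]|ne1]; case: (eqVneq (x, y') (a, b)) => [[E3 E4]|ne2]; subst => //= H1 H2.
- by case/negP: Ha; apply/mapP; eexists; first eassumption.
- by case/negP: Ha; apply/mapP; eexists; first eassumption.
- by apply: IH.
Qed.

Lemma snd_uniq_pair (M : seq (nat * nat)) (x x' y : nat) : uniq (map snd M) -> (x, y) \in M -> (x', y) \in M -> x = x'.
Proof.
elim: M => // [[a b] M IH] /= /andP[Ha U]; rewrite !inE.
case: (eqVneq (x, y) (a, b)) => [[E1 E2]|ne1]; case: (eqVneq (x', y) (a, b)) => [[E3 E4]|ne2]; subst => //= H1 H2.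
- by case/negP: Ha; apply/mapP; eexists; first eassumption.
- by case/negP: Ha; apply/mapP; eexists; first eassumption.
- by apply: IH.
Qed.

Lemma perm_rem2 (M : seq (nat * nat)) a b : a \in M -> b \in rem a M ->
  perm_eq M ([:: a; b] ++ rem b (rem a M)).
Proof.
move=> Ha Hb; apply: (perm_trans (perm_to_rem Ha)) => /=.
by rewrite perm_cons; apply: perm_to_rem.
Qed.

Lemma perm_rem1 (M : seq (nat * nat)) a : a \in M -> perm_eq M ([:: a] ++ rem a M).
Proof. exact: perm_to_rem. Qed.

Lemma mem_rem_sub (M : seq (nat * nat)) a x : x \in rem a M -> x \in M.
Proof. by apply: mem_rem. Qed.

Section Main.
Variables (k T : nat) (sigma : nat -> nat) (C O : nat -> {fset nat}).
Hypothesis HC : valid_run k T sigma C.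
Hypothesis HO : valid_run k T sigma O.

Definition bad t (xy : nat * nat) := next T sigma t xy.2 < next T sigma t xy.1.
Definition Rmiss s := sigma s \notin O s.-1.

Record MInv t (M : seq (nat * nat)) : Prop := {
  m_u1 : uniq (map fst M);
  m_u2 : uniq (map snd M);
  m_1 : forall z, (z \in map fst M) = (z \in C t) && (z \notin O t);
  m_2 : forall z, (z \in map snd M) = (z \in O t) && (z \notin C t) }.

Record EInv t (E : seq (nat * nat)) (col : nat * nat -> nat) : Prop := {
  e_uniq : uniq E;
  e_edge : forall e, e \in E -> exists u, [/\ u <= t, evicted_at T sigma C e.2 u,
              inI sigma C u.-1 e.1 & nu T sigma e.2 < nu T sigma e.1];
  e_tgt : forall e e', e \in E -> e' \in E -> e.2 = e'.2 -> e = e';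
  e_col : forall e, e \in E -> 0 < col e <= t /\ Rmiss (col e);
  e_src : forall e e', e \in E -> e' \in E -> col e = col e' -> e.1 = e'.1;
  e_ovl : forall e e', e \in E -> e' \in E -> e <> e' -> col e = col e' ->
              no_overlap T sigma C e.2 e'.2 }.

Record CInv t (M : seq (nat * nat)) (E : seq (nat * nat)) (col : nat * nat -> nat) (cc : nat -> nat) : Prop := {
  c_cc : forall x, x \in map fst M -> 0 < cc x <= t /\ Rmiss (cc x);
  c_inj : forall x x', x \in map fst M -> x' \in map fst M -> cc x = cc x' -> x = x';
  c_src : forall x e, x \in map fst M -> e \in E -> col e = cc x -> e.1 = lastidx sigma t x;
  c_chain : forall x y e, (x, y) \in M -> e \in E -> col e = cc x ->
     nu T sigma e.2 <= t \/ (bad t (x, y) /\ nu T sigma e.2 <= next T sigma t y) }.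

Definition Inv t M E col cc :=
  [/\ MInv t M, EInv t E col, CInv t M E col cc &
      misses t sigma C + count (bad t) M <= misses t sigma O + size E].

Lemma pair_mem t M x y : MInv t M -> (x, y) \in M ->
  [/\ x \in C t, x \notin O t, y \in O t & y \notin C t].
Proof.
move=> [_ _ H1 H2] Hxy.
have := H1 x; rewrite (map_f fst Hxy) => /esym/andP[-> ->].
by have := H2 y; rewrite (map_f snd Hxy) => /esym/andP[-> ->].
Qed.

Lemma fst_mem t M x : MInv t M -> x \in map fst M -> x \in C t /\ x \notin O t.
Proof. by move=> [_ _ H1 _]; rewrite H1 => /andP. Qed.

Lemma bad_step t M xy : t < T -> MInv t.+1 M -> xy \in M -> bad t.+1 xy = bad t xy.
Proof.
move=> tT HM; case: xy => x y /(pair_mem HM) [h1 h2 h3 h4].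
have px : sigma t.+1 != x by apply/eqP => E; move: h2; rewrite -E (run_in HO).
have py : sigma t.+1 != y by apply/eqP => E; move: h4; rewrite -E (run_in HC).
by rewrite /bad /= -!next_step.
Qed.

Lemma count_bad_step t M : t < T -> MInv t.+1 M -> count (bad t.+1) M = count (bad t) M.
Proof. by move=> tT HM; apply: eq_in_count => xy; apply: bad_step. Qed.

Lemma EInv_mono t E col : EInv t E col -> EInv t.+1 E col.
Proof.
case=> U Ed Tg Co Sr Ov; split=> //.
- by move=> e /Ed [u [h1 h2 h3 h4]]; exists u; split=> //; lia.
- by move=> e /Co [h1 h2]; split=> //; lia.
Qed.

Lemma EInv_add t E col en cn : t < T -> EInv t E col ->
  evicted_at T sigma C en.2 t.+1 -> inI sigma C t en.1 -> nu T sigma en.2 < nu T sigma en.1 ->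
  0 < cn <= t.+1 -> Rmiss cn ->
  (forall e, e \in E -> col e = cn -> e.1 = en.1 /\ nu T sigma e.2 <= t.+1) ->
  en \notin E /\ EInv t.+1 (en :: E) (upd col en cn).
Proof.
move=> tT [U Ed Tg Co Sr Ov] Hev HI Hnu Hc1 Hc2 Hcol.
have Hold : forall e, e \in E -> e.2 <> en.2.
  move=> e He E2; have [u [u1 u2 _ _]] := Ed e He.
  by move: u2; rewrite E2 => /(evicted_uniq HC Hev) Ee; lia.
have nE : en \notin E by apply/negP => /Hold; case.
have updo : forall e, e \in E -> upd col en cn e = col e.
  by move=> e He; rewrite updE; case: eqP => // Ee; move: He; rewrite Ee (negbTE nE).
have ovl : forall e, e \in E -> col e = cn -> no_overlap T sigma C e.2 en.2 /\ no_overlap T sigma C en.2 e.2.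
  move=> e He Hce; have [u [u1 u2 _ _]] := Ed e He; have [_ Hn] := Hcol e He Hce.
  split=> v1 v2 H1 H2.
  - rewrite (evicted_uniq HC H1 u2) (evicted_uniq HC H2 Hev); split=> h //; exfalso; clear -h u1; lia.
  - rewrite (evicted_uniq HC H1 Hev) (evicted_uniq HC H2 u2); split=> h //; exfalso; clear -h u1; lia.
split=> //; split.
- by rewrite /= nE.
- move=> e; rewrite inE => /orP[/eqP->|/Ed [u [u1 u2 u3 u4]]]; first by exists t.+1.
  by exists u; split=> //; lia.
- move=> e e'; rewrite !inE => /orP[/eqP->|He] /orP[/eqP->|He'] // E2.
  + by case: (Hold _ He' (esym E2)).
  + by case: (Hold _ He E2).
  + exact: Tg.
- move=> e; rewrite inE => /orP[/eqP->|He]; first by rewrite updE eqxx.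
  by rewrite updo //; have [h1 h2] := Co e He; split=> //; lia.
- move=> e e'; rewrite !inE => /orP[/eqP->|He] /orP[/eqP->|He'] //.
  + by rewrite [upd _ _ _ en]updE eqxx updo // => Ee; have [-> _] := Hcol e' He' (esym Ee).
  + by rewrite [upd _ _ _ en]updE eqxx updo // => Ee; have [-> _] := Hcol e He Ee.
  + by rewrite !updo //; apply: Sr.
- move=> e e'; rewrite !inE => /orP[/eqP->|He] /orP[/eqP->|He'] //.
  + by rewrite [upd _ _ _ en]updE eqxx updo // => _ Ee; have [] := ovl e' He' (esym Ee).
  + by rewrite [upd _ _ _ en]updE eqxx updo // => _ Ee; have [] := ovl e He Ee.
  + by rewrite !updo //; apply: Ov.
Qed.


Lemma pair_neq t M x y : t < T -> MInv t.+1 M -> (x, y) \in M ->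
  sigma t.+1 != x /\ sigma t.+1 != y.
Proof.
move=> tT HM /(pair_mem HM) [h1 h2 h3 h4]; split.
  by apply/eqP => Ee; move: h2; rewrite -Ee (run_in HO).
by apply/eqP => Ee; move: h4; rewrite -Ee (run_in HC).
Qed.

Lemma CInv_step t M M' E col cc xf : t < T -> MInv t M -> MInv t.+1 M' -> CInv t M E col cc ->
  EInv t E col ->
  (xf \in map fst M' -> Rmiss t.+1) ->
  (forall x y, (x, y) \in M' -> x != xf -> x \in map fst M /\
     ((x, y) \in M \/ forall e, e \in E -> col e = cc x -> nu T sigma e.2 <= t.+1)) ->
  CInv t.+1 M' E col (upd cc xf t.+1).
Proof.
move=> tT HM HM' [Ccc Cinj Csrc Cch] HE Hfr Hold.
have getp : forall x, x \in map fst M' -> exists y, (x, y) \in M'.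
  by move=> x /mapP [[a b] Hab /= ->]; exists b.
split.
- move=> x Hx; rewrite updE; case: (eqVneq x xf) => [Ex|ne].
    by subst xf; split; [lia|exact: Hfr Hx].
  have [y Hy] := getp x Hx; have [Hx0 _] := Hold x y Hy ne.
  by have [h1 h2] := Ccc x Hx0; split=> //; lia.
- move=> x x' Hx Hx'; rewrite !updE.
  case: (eqVneq x xf) => [->|ne]; case: (eqVneq x' xf) => [->|ne'] //.
  + have [y Hy] := getp x' Hx'; have [Hx0 _] := Hold x' y Hy ne'.
    by have [h1 h2] := Ccc x' Hx0; lia.
  + have [y Hy] := getp x Hx; have [Hx0 _] := Hold x y Hy ne.
    by have [h1 h2] := Ccc x Hx0; lia.
  + have [y Hy] := getp x Hx; have [Hx0 _] := Hold x y Hy ne.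
    have [y' Hy'] := getp x' Hx'; have [Hx0' _] := Hold x' y' Hy' ne'.
    exact: Cinj.
- move=> x e Hx He; rewrite updE; case: (eqVneq x xf) => [_|ne].
    by have [h1 h2] := e_col HE He; lia.
  have [y Hy] := getp x Hx; have [Hx0 _] := Hold x y Hy ne.
  have [px _] := pair_neq tT HM' Hy.
  by move=> Hc; rewrite (Csrc x e Hx0 He Hc) lastidx_step.
- move=> x y e Hxy He; rewrite updE; case: (eqVneq x xf) => [_|ne].
    by have [h1 h2] := e_col HE He; lia.
  have [_ [Hin|Hall]] := Hold x y Hxy ne => Hc; last by left; apply: Hall.
  have [px py] := pair_neq tT HM' Hxy.
  case: (Cch x y e Hin He Hc) => [h|[h1 h2]]; first by left; lia.
  by right; rewrite (bad_step tT HM' Hxy) -next_step.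
Qed.

Lemma CInv_add t M' E col cc xs ys en : t < T -> MInv t.+1 M' -> CInv t.+1 M' E col cc ->
  en \notin E -> (xs, ys) \in M' -> bad t.+1 (xs, ys) ->
  nu T sigma en.2 <= next T sigma t.+1 ys -> en.1 = lastidx sigma t.+1 xs ->
  CInv t.+1 M' (en :: E) (upd col en (cc xs)) cc.
Proof.
move=> tT HM' [Ccc Cinj Csrc Cch] nE Hs Hb Hn Hl.
have updo : forall e, e \in E -> upd col en (cc xs) e = col e.
  by move=> e He; rewrite updE; case: eqP => // Ee; move: He; rewrite Ee (negbTE nE).
have Hxs : xs \in map fst M' by apply: (map_f fst Hs).
split=> //.
- move=> x e Hx; rewrite inE => /orP[/eqP->|He].
    by rewrite updE eqxx => /(Cinj _ _ Hxs Hx) <-.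
  by rewrite updo //; apply: Csrc.
- move=> x y e Hxy; rewrite inE => /orP[/eqP->|He].
    rewrite updE eqxx => /(Cinj _ _ Hxs (map_f fst Hxy)) /= Ex; subst x.
    by right; rewrite -(fst_uniq_pair (m_u1 HM') Hs Hxy).
  by rewrite updo //; apply: Cch.
Qed.

Lemma finish t M E col cc M' xf (b : bool) en xs ys :
  t < T -> Inv t M E col cc -> MInv t.+1 M' ->
  (xf \in map fst M' -> Rmiss t.+1) ->
  (forall x y, (x, y) \in M' -> x != xf -> x \in map fst M /\
     ((x, y) \in M \/ forall e, e \in E -> col e = cc x -> nu T sigma e.2 <= t.+1)) ->
  misses t.+1 sigma C + count (bad t) M' <= misses t.+1 sigma O + size E + b ->
  (b -> [/\ evicted_at T sigma C en.2 t.+1, inI sigma C t en.1, (xs, ys) \in M',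
           bad t (xs, ys) & [/\ nu T sigma en.2 <= next T sigma t ys,
           nu T sigma en.2 < nu T sigma en.1 & en.1 = lastidx sigma t xs]]) ->
  (b -> xs != xf -> forall e, e \in E -> col e = cc xs -> nu T sigma e.2 <= t.+1) ->
  exists M2 E2 col2 cc2, Inv t.+1 M2 E2 col2 cc2.
Proof.
move=> tT [HM HE HCI Hcost] HM' Hfr Hold Hc Hedge HK2.
have HCI' := CInv_step tT HM HM' HCI HE Hfr Hold.
case: b Hc Hedge HK2 => Hc Hedge HK2; last first.
  exists M', E, col, (upd cc xf t.+1); split=> //; first exact: EInv_mono.
  by rewrite (count_bad_step tT HM'); clear -Hcost Hc; lia.
have [h1 h2 h3 h4 [h5 h6 h7]] := Hedge isT.
have [pxs pys] := pair_neq tT HM' h3.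
have Hxs : xs \in map fst M' by apply: (map_f fst h3).
have [Hc1 Hc2] := c_cc HCI' Hxs.
have Hcol : forall e, e \in E -> col e = upd cc xf t.+1 xs -> e.1 = en.1 /\ nu T sigma e.2 <= t.+1.
  move=> e He; rewrite updE; case: (eqVneq xs xf) => [_|ne].
    by have [g1 _] := e_col HE He => Hce; exfalso; rewrite Hce in g1; clear -g1; lia.
  have [Hx0 _] := Hold xs ys h3 ne.
  by move=> Hce; split; [rewrite h7; apply: (c_src HCI) | apply: HK2].
have [nE HE'] := EInv_add tT HE h1 h2 h6 Hc1 Hc2 Hcol.
exists M', (en :: E), (upd col en (upd cc xf t.+1 xs)), (upd cc xf t.+1); split=> //.
- apply: (CInv_add tT HM' HCI' nE h3).
  + by rewrite (bad_step tT HM' h3).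
  + by rewrite -next_step.
  + by rewrite lastidx_step.
- by rewrite (count_bad_step tT HM') /=; clear -Hcost Hc; lia.
Qed.

Ltac solve_mem :=
  repeat (first
  [ match goal with
    | H1 : is_true (?a \in ?S), H2 : is_true (?a \notin ?S) |- _ => by rewrite H1 in H2
    | H : is_true (?a != ?a) |- _ => by rewrite eqxx in H
    | H : is_true (?a \in ?S) |- context [?a \in ?S] => rewrite H
    | H : is_true (?a \notin ?S) |- context [?a \in ?S] => rewrite (negbTE H)
    | H : is_true (?a != ?b) |- context [?a == ?b] => rewrite (negbTE H)
    | H : is_true (?a != ?b) |- context [?b == ?a] => rewrite eq_sym (negbTE H)
    | |- context [?a == ?a] => rewrite eqxx
    | |- context [?a == ?b] => case: (eqVneq a b) => [?|?]; [subst|]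
    end
  | progress rewrite /= ?andbT ?andbF ?orbF ?orbT ]); try by [].
Ltac fin_mem := repeat match goal with |- context [?a \in ?S] => case: (a \in S) end.

Lemma MInv_build t (M olds L news : seq (nat * nat)) : MInv t M -> perm_eq M (olds ++ L) ->
  uniq (map fst news) -> uniq (map snd news) ->
  (forall z, z \in map fst news -> ~~ (((z \in C t) && (z \notin O t)) && (z \notin map fst olds))) ->
  (forall z, z \in map snd news -> ~~ (((z \in O t) && (z \notin C t)) && (z \notin map snd olds))) ->
  (forall z, (z \in map fst news) || (((z \in C t) && (z \notin O t)) && (z \notin map fst olds)) =
             (z \in C t.+1) && (z \notin O t.+1)) ->
  (forall z, (z \in map snd news) || (((z \in O t) && (z \notin C t)) && (z \notin map snd olds)) =
             (z \in O t.+1) && (z \notin C t.+1)) ->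
  MInv t.+1 (news ++ L).
Proof.
move=> [U1 U2 H1 H2] P N1 N2 F1 F2 G1 G2; split.
- by apply: (@uniq_build fst M olds L news P) => // z /F1; rewrite (@mem_build fst M olds L z P) // H1.
- by apply: (@uniq_build snd M olds L news P) => // z /F2; rewrite (@mem_build snd M olds L z P) // H2.
- by move=> z; rewrite map_cat mem_cat (@mem_build fst M olds L z P) // H1.
- by move=> z; rewrite map_cat mem_cat (@mem_build snd M olds L z P) // H2.
Qed.



Lemma step t M E col cc : t < T -> Inv t M E col cc ->
  exists M2 E2 col2 cc2, Inv t.+1 M2 E2 col2 cc2.
Proof.
move=> tT HI; have [HM HE HCI Hcost] := HI.
have HpC := run_in HC tT; have HpO := run_in HO tT.
have sC : forall z, z \in C t -> seen sigma t z := fun z => run_seen HC (ltnW tT).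
have sO : forall z, z \in O t -> seen sigma t z := fun z => run_seen HO (ltnW tT).
have fC : (#|` C t| < k)%N -> forall z, seen sigma t z -> z \in C t := fun h z => run_full HC (ltnW tT) h.
have fO : (#|` O t| < k)%N -> forall z, seen sigma t z -> z \in O t := fun h z => run_full HO (ltnW tT) h.
case: (vstep_cases (run_step HC tT)) => [[Hpc EC]|[Hpc Hk EC]|[q [Hpc Hk Hq EC]]];
case: (vstep_cases (run_step HO tT)) => [[Hpo EO]|[Hpo Hko EO]|[r0 [Hpo Hko Hr EO]]].
- (* hit hit *)
  apply: (finish (M':=M) (xf:=sigma t.+1) (b:=false) (en:=(0,0)) (xs:=0) (ys:=0) tT HI) => //.
  + by case: HM => a b c d; split; rewrite ?EC ?EO.
  + by move=> /(fst_mem HM) [_]; rewrite Hpo.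
  + by move=> x y Hxy _; split; [exact: (map_f fst Hxy) | left].
  + by rewrite !missesS Hpc Hpo /=; clear -Hcost; lia.
- (* hit, O insert : impossible *)
  by move: Hpo; rewrite (fO Hko _ (sC _ Hpc)).
- (* hit, O evict *)
  have UM : uniq M := map_uniq (m_u1 HM).
  have Hp1 : sigma t.+1 \in map fst M by rewrite (m_1 HM) Hpc Hpo.
  case/mapP: Hp1 => [[p' y0] Hpy0 /= Ep]; subst p'.
  have [_ _ Hy0c Hy0d] := pair_mem HM Hpy0.
  case: (eqVneq r0 y0) => [Er|ner].
  +
    subst r0.
    have P := perm_rem1 Hpy0.
    have HM' : MInv t.+1 ([::] ++ rem (sigma t.+1, y0) M).
      by apply: (MInv_build HM P) => // z; rewrite ?EC ?EO /= ?inE; clear -Hpc Hpo Hy0c Hy0d; try (move=> /eqP ->); solve_mem; fin_mem.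
    apply: (finish (xf:=sigma t.+1) (b:=false) (en:=(0,0)) (xs:=0) (ys:=0) tT HI HM') => //.
      all: first [ by move=> _ _; apply: HK2 | by move=> _; rewrite eqxx | idtac ].
    * by move=> x y /mem_rem Hxy _; split; [exact: (map_f fst Hxy) | left].
    * have Hc := Hcost; rewrite (permP P (bad t)) /= in Hc; rewrite !missesS Hpc Hpo /=; set LL := count (bad t) (rem _ _) in Hc *; clear -Hc LL; lia.
  + case: (boolP (r0 \in C t)) => Hrc.
    *
      have P := perm_rem1 Hpy0.
      have HM' : MInv t.+1 ([:: (r0, y0)] ++ rem (sigma t.+1, y0) M).
        by apply: (MInv_build HM P) => // z; rewrite ?EC ?EO /= ?inE; clear -Hpc Hpo Hy0c Hy0d Hrc Hr ner; try (move=> /eqP ->); solve_mem; fin_mem.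
      apply: (finish (xf:=r0) (b:=false) (en:=(0,0)) (xs:=0) (ys:=0) tT HI HM') => //.
      all: first [ by move=> _ _; apply: HK2 | by move=> _; rewrite eqxx | idtac ].
      -- move=> x y; rewrite mem_cat inE => /orP[/eqP[-> _]|/mem_rem Hxy]; first by rewrite eqxx.
         by move=> _; split; [exact: (map_f fst Hxy) | left].
      -- have Hc := Hcost; rewrite (permP P (bad t)) /= in Hc; rewrite !missesS Hpc Hpo /=; set LL := count (bad t) (rem _ _) in Hc *; have hb := leq_b1 (bad t (r0, y0)); clear -Hc hb LL; lia.
    *
      have Hr1 : r0 \in map snd M by rewrite (m_2 HM) Hr Hrc.
      case/mapP: Hr1 => [[xr r'] Hxr /= Er]; subst r'.
      have [Hxa Hxb _ _] := pair_mem HM Hxr.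
      have nxr : xr != sigma t.+1.
        by apply/eqP => Ex; subst xr; case/eqP: ner; apply: (fst_uniq_pair (m_u1 HM) Hxr Hpy0).
      have Hxr' : (xr, r0) \in rem (sigma t.+1, y0) M.
        by rewrite (mem_rem_uniq _ UM) inE Hxr andbT; apply/eqP => [[]] /eqP; rewrite (negbTE nxr).
      have P := perm_rem2 Hpy0 Hxr'.
      have HM' : MInv t.+1 ([:: (xr, y0)] ++ rem (xr, r0) (rem (sigma t.+1, y0) M)).
        by apply: (MInv_build HM P) => // z; rewrite ?EC ?EO /= ?inE; clear -Hpc Hpo Hy0c Hy0d Hrc Hr ner Hxa Hxb nxr; try (move=> /eqP ->); solve_mem; fin_mem.
      apply: (finish (xf:=xr) (b:=false) (en:=(0,0)) (xs:=0) (ys:=0) tT HI HM') => //.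
      all: first [ by move=> _ _; apply: HK2 | by move=> _; rewrite eqxx | idtac ].
      -- move=> x y; rewrite mem_cat inE => /orP[/eqP[-> _]|/mem_rem/mem_rem Hxy]; first by rewrite eqxx.
         by move=> _; split; [exact: (map_f fst Hxy) | left].
      -- have Hc := Hcost; rewrite (permP P (bad t)) /= in Hc; rewrite !missesS Hpc Hpo /=; set LL := count (bad t) (rem _ _) in Hc *; have hb := leq_b1 (bad t (xr, y0)); clear -Hc hb LL; lia.
- (* insert, O hit : impossible *)
  by move: Hpc; rewrite (fC Hk _ (sO _ Hpo)).
- (* insert insert *)
  have P : perm_eq M ([::] ++ M) by [].
  have HM' : MInv t.+1 ([::] ++ M).
    by apply: (MInv_build HM P) => // z; rewrite EC EO !in_fset1U /=; solve_mem; fin_mem.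
  apply: (finish (M':=M) (xf:=sigma t.+1) (b:=false) (en:=(0,0)) (xs:=0) (ys:=0) tT HI HM') => //.
      all: first [ by move=> _ _; apply: HK2 | by move=> _; rewrite eqxx | idtac ].
  + by move=> x y Hxy _; split; [exact: (map_f fst Hxy) | left].
  + by rewrite !missesS Hpc Hpo /=; clear -Hcost; lia.
- (* insert, O evict : impossible *)
  exfalso; have sub : O t `<=` C t by apply/fsubsetP => z /sO /(fC Hk).
  have h1 := fsubset_leq_card sub; move: Hko; rewrite -leqNgt => Hko; clear -h1 Hko Hk; lia.
- (* evict, O hit *)
  have UM : uniq M := map_uniq (m_u1 HM).
  have Hp1 : sigma t.+1 \in map snd M by rewrite (m_2 HM) Hpc Hpo.
  case/mapP: Hp1 => [[x0 p'] Hx0p /= Ep]; subst p'.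
  have [Hx0a Hx0b _ _] := pair_mem HM Hx0p.
  have nx0 : sigma t.+1 != x0 by apply/eqP => Ex; move: Hpc; rewrite Ex Hx0a.
  have hbad : bad t (x0, sigma t.+1).
    by rewrite /bad /= next_hit //; apply: next_neq.
  have HK2 : forall e, e \in E -> col e = cc x0 -> nu T sigma e.2 <= t.+1.
    move=> e He Hce; case: (c_chain HCI Hx0p He Hce) => [h|[_ h]]; first by clear -h; lia.
    by rewrite next_hit in h.
  have qp : q != sigma t.+1 by apply/eqP => Eq; move: Hpc; rewrite -Eq Hq.
  have Hsq : seen sigma t q := sC q Hq.
  have Hsx0 : seen sigma t x0 := sC x0 Hx0a.
  have Hev : evicted_at T sigma C (lastidx sigma t q) t.+1.
    have [_ E1 _] := lastidx_props Hsq.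
    rewrite /evicted_at E1 Hq EC in_fset1U in_fsetD1 eqxx (negbTE qp) /= inI_lastidx // andbT.
    by [].

  have HIx0 : inI sigma C t (lastidx sigma t x0) by apply: inI_lastidx.
  have nuq : nu T sigma (lastidx sigma t q) = next T sigma t q by exact: nu_lastidx (ltnW tT) Hsq.
  have nux0 : nu T sigma (lastidx sigma t x0) = next T sigma t x0 by exact: nu_lastidx (ltnW tT) Hsx0.
  case: (eqVneq q x0) => [Eq|nq].
  +
    subst q.
    have P := perm_rem1 Hx0p.
    have HM' : MInv t.+1 ([::] ++ rem (x0, sigma t.+1) M).
      by apply: (MInv_build HM P) => // z; rewrite ?EC ?EO /= ?inE; clear -Hpc Hpo Hx0a Hx0b; try (move=> /eqP ->); solve_mem; fin_mem.
    apply: (finish (xf:=sigma t.+1) (b:=false) (en:=(0,0)) (xs:=0) (ys:=0) tT HI HM') => //.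
      all: first [ by move=> _ _; apply: HK2 | by move=> _; rewrite eqxx | idtac ].
    * by move=> /(fst_mem HM') [_]; rewrite HpO.
    * by move=> x y /mem_rem Hxy _; split; [exact: (map_f fst Hxy) | left].
    * have Hc := Hcost; rewrite (permP P (bad t)) /= hbad in Hc; rewrite !missesS Hpc Hpo /=.
      set LL := count (bad t) (rem _ _) in Hc *; clear -Hc LL; lia.
  + case: (boolP (q \in O t)) => Hqo.
    *
      have P := perm_rem1 Hx0p.
      have HM' : MInv t.+1 ([:: (x0, q)] ++ rem (x0, sigma t.+1) M).
        by apply: (MInv_build HM P) => // z; rewrite ?EC ?EO /= ?inE; clear -Hpc Hpo Hx0a Hx0b Hq Hqo nq; try (move=> /eqP ->); solve_mem; fin_mem.
      apply: (finish (xf:=sigma t.+1) (b:=bad t (x0, q)) (en:=(lastidx sigma t x0, lastidx sigma t q)) (xs:=x0) (ys:=q) tT HI HM') => //.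
      all: first [ by move=> _ _; apply: HK2 | by move=> _; rewrite eqxx | idtac ].
      -- by move=> /(fst_mem HM') [_]; rewrite HpO.
      -- move=> x y; rewrite mem_cat inE => /orP[/eqP[-> _]|/mem_rem Hxy] _.
           by split; [exact: (map_f fst Hx0p)| right].
         by split; [exact: (map_f fst Hxy) | left].
      -- have Hc := Hcost; rewrite (permP P (bad t)) /= hbad in Hc; rewrite !missesS Hpc Hpo /=.
         set LL := count (bad t) (rem _ _) in Hc *; clear -Hc LL; lia.
      -- move=> Hb; split=> //=; first by rewrite ?mem_cat inE eqxx.
         by split; rewrite ?nuq ?nux0 //.
    *
      have Hq1 : q \in map fst M by rewrite (m_1 HM) Hq Hqo.
      case/mapP: Hq1 => [[q' yq] Hqy /= Eq']; subst q'.
      have [_ _ Hyqa Hyqb] := pair_mem HM Hqy.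
      have nyq : yq != sigma t.+1.
        by apply/eqP => Ey; subst yq; case/eqP: nq; apply: (snd_uniq_pair (m_u2 HM) Hqy Hx0p).
      have Hqy' : (q, yq) \in rem (x0, sigma t.+1) M.
        by rewrite (mem_rem_uniq _ UM) inE Hqy andbT; apply/eqP => [[]] /eqP; rewrite (negbTE nq).
      have P := perm_rem2 Hx0p Hqy'.
      have HM' : MInv t.+1 ([:: (x0, yq)] ++ rem (q, yq) (rem (x0, sigma t.+1) M)).
        by apply: (MInv_build HM P) => // z; rewrite ?EC ?EO /= ?inE; clear -Hpc Hpo Hx0a Hx0b Hq Hqo nq Hyqa Hyqb nyq; try (move=> /eqP ->); solve_mem; fin_mem.
      apply: (finish (xf:=sigma t.+1) (b:=bad t (x0, yq) && ~~ bad t (q, yq)) (en:=(lastidx sigma t x0, lastidx sigma t q)) (xs:=x0) (ys:=yq) tT HI HM') => //.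
      all: first [ by move=> _ _; apply: HK2 | by move=> _; rewrite eqxx | idtac ].
      -- by move=> /(fst_mem HM') [_]; rewrite HpO.
      -- move=> x y; rewrite mem_cat inE => /orP[/eqP[-> _]|/mem_rem/mem_rem Hxy] _.
           by split; [exact: (map_f fst Hx0p)| right].
         by split; [exact: (map_f fst Hxy) | left].
      -- have Hc := Hcost; rewrite (permP P (bad t)) /= hbad in Hc; rewrite !missesS Hpc Hpo /=.
         set LL := count (bad t) (rem _ _) in Hc *; move: Hc.
         by case: (bad t (x0, yq)); case: (bad t (q, yq)) => /= Hc; clear -Hc LL; lia.
      -- move=> /andP[Hb1 Hb2]; split=> //=; first by rewrite ?mem_cat inE eqxx.
         move: Hb1 Hb2; rewrite /bad /= -leqNgt => Hb1 Hb2.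
         by split; rewrite ?nuq ?nux0 //; apply: leq_ltn_trans Hb2 Hb1.
- (* evict, O insert : impossible *)
  exfalso; have sub : C t `<=` O t by apply/fsubsetP => z /sC /(fO Hko).
  have h1 := fsubset_leq_card sub; move: Hk; rewrite -leqNgt => Hk; clear -h1 Hko Hk; lia.
- (* evict evict *)
  have UM : uniq M := map_uniq (m_u1 HM).
  have qp : q != sigma t.+1 by apply/eqP => Eq; move: Hpc; rewrite -Eq Hq.
  have rp : r0 != sigma t.+1 by apply/eqP => Eq; move: Hpo; rewrite -Eq Hr.
  have Hsq : seen sigma t q := sC q Hq.
  have Hev : evicted_at T sigma C (lastidx sigma t q) t.+1.
    have [_ E1 _] := lastidx_props Hsq.
    by rewrite /evicted_at E1 Hq EC in_fset1U in_fsetD1 eqxx (negbTE qp) /= inI_lastidx // andbT.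
  have nuq : nu T sigma (lastidx sigma t q) = next T sigma t q by exact: nu_lastidx (ltnW tT) Hsq.
  have HIx : forall x, x \in C t -> inI sigma C t (lastidx sigma t x) /\
      nu T sigma (lastidx sigma t x) = next T sigma t x.
    move=> x Hx; split; [apply: inI_lastidx => //; exact: sC | apply: nu_lastidx; [exact: ltnW tT|exact: sC]].
  have mC : misses t.+1 sigma C = (misses t sigma C + 1)%N by rewrite missesS Hpc.
  have mO : misses t.+1 sigma O = (misses t sigma O + 1)%N by rewrite missesS Hpo.
  case: (eqVneq q r0) => [Eqr|nqr].
  +
    subst r0.
    have P : perm_eq M ([::] ++ M) by [].
    have HM' : MInv t.+1 ([::] ++ M).
      by apply: (MInv_build HM P) => // z; rewrite ?EC ?EO /= ?inE; clear -Hpc Hpo Hq Hr; try (move=> /eqP ->); solve_mem; fin_mem.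
    apply: (finish (M':=M) (xf:=sigma t.+1) (b:=false) (en:=(0,0)) (xs:=0) (ys:=0) tT HI HM') => //.
      all: first [ by move=> _ _; apply: HK2 | by move=> _; rewrite eqxx | idtac ].
    * by move=> x y Hxy _; split; [exact: (map_f fst Hxy) | left].
    * by rewrite mC mO; clear -Hcost; lia.
  + case: (boolP (q \in O t)) => Hqo; case: (boolP (r0 \in C t)) => Hrc.
    *
      have P : perm_eq M ([::] ++ M) by [].
      have HM' : MInv t.+1 ([:: (r0, q)] ++ M).
        by apply: (MInv_build HM P) => // z; rewrite ?EC ?EO /= ?inE; clear -Hpc Hpo Hq Hr Hqo Hrc nqr; try (move=> /eqP ->); solve_mem; fin_mem.
      have [HIr nur] := HIx r0 Hrc.
      apply: (finish (xf:=r0) (b:=bad t (r0, q)) (en:=(lastidx sigma t r0, lastidx sigma t q)) (xs:=r0) (ys:=q) tT HI HM') => //.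
      all: first [ by move=> _ _; apply: HK2 | by move=> _; rewrite eqxx | idtac ].
      -- move=> x y; rewrite mem_cat inE => /orP[/eqP[-> _]|Hxy]; first by rewrite eqxx.
         by move=> _; split; [exact: (map_f fst Hxy) | left].
      -- rewrite mC mO /=; clear -Hcost; lia.
      -- move=> Hb; split=> //=; first by rewrite ?mem_cat inE eqxx.
         by split; rewrite ?nuq ?nur //.
    *
      have Hr1 : r0 \in map snd M by rewrite (m_2 HM) Hr Hrc.
      case/mapP: Hr1 => [[xr r'] Hxr /= Er]; subst r'.
      have [Hxa Hxb _ _] := pair_mem HM Hxr.
      have P := perm_rem1 Hxr.
      have HM' : MInv t.+1 ([:: (xr, q)] ++ rem (xr, r0) M).
        by apply: (MInv_build HM P) => // z; rewrite ?EC ?EO /= ?inE; clear -Hpc Hpo Hq Hr Hqo Hrc nqr Hxa Hxb; try (move=> /eqP ->); solve_mem; fin_mem.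
      have [HIr nur] := HIx xr Hxa.
      apply: (finish (xf:=xr) (b:=bad t (xr, q)) (en:=(lastidx sigma t xr, lastidx sigma t q)) (xs:=xr) (ys:=q) tT HI HM') => //.
      all: first [ by move=> _ _; apply: HK2 | by move=> _; rewrite eqxx | idtac ].
      -- move=> x y; rewrite mem_cat inE => /orP[/eqP[-> _]|/mem_rem Hxy]; first by rewrite eqxx.
         by move=> _; split; [exact: (map_f fst Hxy) | left].
      -- have Hc := Hcost; rewrite (permP P (bad t)) /= in Hc; rewrite mC mO /=.
         set LL := count (bad t) (rem _ _) in Hc *; have hb := leq_b1 (bad t (xr, r0)); clear -Hc LL hb; lia.
      -- move=> Hb; split=> //=; first by rewrite ?mem_cat inE eqxx.
         by split; rewrite ?nuq ?nur //.
    *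
      have Hq1 : q \in map fst M by rewrite (m_1 HM) Hq Hqo.
      case/mapP: Hq1 => [[q' yq] Hqy /= Eq']; subst q'.
      have [_ _ Hyqa Hyqb] := pair_mem HM Hqy.
      have P := perm_rem1 Hqy.
      have HM' : MInv t.+1 ([:: (r0, yq)] ++ rem (q, yq) M).
        by apply: (MInv_build HM P) => // z; rewrite ?EC ?EO /= ?inE; clear -Hpc Hpo Hq Hr Hqo Hrc nqr Hyqa Hyqb; try (move=> /eqP ->); solve_mem; fin_mem.
      have [HIr nur] := HIx r0 Hrc.
      apply: (finish (xf:=r0) (b:=bad t (r0, yq) && ~~ bad t (q, yq)) (en:=(lastidx sigma t r0, lastidx sigma t q)) (xs:=r0) (ys:=yq) tT HI HM') => //.
      all: first [ by move=> _ _; apply: HK2 | by move=> _; rewrite eqxx | idtac ].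
      -- move=> x y; rewrite mem_cat inE => /orP[/eqP[-> _]|/mem_rem Hxy]; first by rewrite eqxx.
         by move=> _; split; [exact: (map_f fst Hxy) | left].
      -- have Hc := Hcost; rewrite (permP P (bad t)) /= in Hc; rewrite mC mO /=.
         set LL := count (bad t) (rem _ _) in Hc *; move: Hc.
         by case: (bad t (r0, yq)); case: (bad t (q, yq)) => /= Hc; clear -Hc LL; lia.
      -- move=> /andP[Hb1 Hb2]; split=> //=; first by rewrite ?mem_cat inE eqxx.
         move: Hb1 Hb2; rewrite /bad /= -leqNgt => Hb1 Hb2.
         by split; rewrite ?nuq ?nur //; apply: leq_ltn_trans Hb2 Hb1.
    *
      have Hq1 : q \in map fst M by rewrite (m_1 HM) Hq Hqo.
      case/mapP: Hq1 => [[q' yq] Hqy /= Eq']; subst q'.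
      have [_ _ Hyqa Hyqb] := pair_mem HM Hqy.
      have Hr1 : r0 \in map snd M by rewrite (m_2 HM) Hr Hrc.
      case/mapP: Hr1 => [[xr r'] Hxr /= Er]; subst r'.
      have [Hxa Hxb _ _] := pair_mem HM Hxr.
      case: (eqVneq yq r0) => [Ey|nyr].
      -- subst yq.
         have Exq : xr = q by apply: (snd_uniq_pair (m_u2 HM) Hxr Hqy).
         subst xr.
         have P := perm_rem1 Hqy.
         have HM' : MInv t.+1 ([::] ++ rem (q, r0) M).
           by apply: (MInv_build HM P) => // z; rewrite ?EC ?EO /= ?inE; clear -Hpc Hpo Hq Hr Hqo Hrc nqr; try (move=> /eqP ->); solve_mem; fin_mem.
         apply: (finish (xf:=sigma t.+1) (b:=false) (en:=(0,0)) (xs:=0) (ys:=0) tT HI HM') => //.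
      all: first [ by move=> _ _; apply: HK2 | by move=> _; rewrite eqxx | idtac ].
         ++ by move=> x y /mem_rem Hxy _; split; [exact: (map_f fst Hxy) | left].
         ++ have Hc := Hcost; rewrite (permP P (bad t)) /= in Hc; rewrite mC mO /=.
            set LL := count (bad t) (rem _ _) in Hc *; clear -Hc LL; lia.
      -- have nxq : xr != q.
           by apply/eqP => Ex; subst xr; case/eqP: nyr; apply: (fst_uniq_pair (m_u1 HM) Hqy Hxr).
         have Hxr' : (xr, r0) \in rem (q, yq) M.
           by rewrite (mem_rem_uniq _ UM) inE Hxr andbT; apply/eqP => [[]] /eqP; rewrite (negbTE nxq).
         have P := perm_rem2 Hqy Hxr'.
         have HM' : MInv t.+1 ([:: (xr, yq)] ++ rem (xr, r0) (rem (q, yq) M)).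
           by apply: (MInv_build HM P) => // z; rewrite ?EC ?EO /= ?inE; clear -Hpc Hpo Hq Hr Hqo Hrc nqr Hyqa Hyqb Hxa Hxb nyr nxq; try (move=> /eqP ->); solve_mem; fin_mem.
         have [HIr nur] := HIx xr Hxa.
         apply: (finish (xf:=xr) (b:=bad t (xr, yq) && ~~ bad t (q, yq)) (en:=(lastidx sigma t xr, lastidx sigma t q)) (xs:=xr) (ys:=yq) tT HI HM') => //.
      all: first [ by move=> _ _; apply: HK2 | by move=> _; rewrite eqxx | idtac ].
         ++ move=> x y; rewrite mem_cat inE => /orP[/eqP[-> _]|/mem_rem/mem_rem Hxy]; first by rewrite eqxx.
            by move=> _; split; [exact: (map_f fst Hxy) | left].
         ++ have Hc := Hcost; rewrite (permP P (bad t)) /= in Hc; rewrite mC mO /=.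
            set LL := count (bad t) (rem _ _) in Hc *; move: Hc.
            by case: (bad t (xr, yq)); case: (bad t (q, yq)); case: (bad t (xr, r0)) => /= Hc; clear -Hc LL; lia.
         ++ move=> /andP[Hb1 Hb2]; split=> //=; first by rewrite ?mem_cat inE eqxx.
            move: Hb1 Hb2; rewrite /bad /= -leqNgt => Hb1 Hb2.
            by split; rewrite ?nuq ?nur //; apply: leq_ltn_trans Hb2 Hb1.
Qed.

Lemma inv0 : Inv 0 [::] [::] (fun _ => 0) (fun _ => 0).
Proof.
case: HC => C0 _; case: HO => O0 _.
split; split=> //; try by move=> z; rewrite C0 O0 inE.
Qed.

Lemma invT t : t <= T -> exists M E col cc, Inv t M E col cc.
Proof.
elim: t => [_|t IH tT]; first by exists [::], [::], (fun _ => 0), (fun _ => 0); apply: inv0.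
have [M [E [col [cc H]]]] := IH (ltnW tT).
exact: step tT H.
Qed.
End Main.

Theorem mainTheorem7 (k T : nat) (sigma : nat -> nat) (C : nat -> {fset nat})
  (OPT : nat) :
  valid_run k T sigma C -> is_OPT k T sigma OPT ->
  exists (E : seq (nat * nat)) (col : nat * nat -> nat),
    [/\ eviction_graph T sigma C E,
        (forall e e', e \in E -> e' \in E -> col e = col e' -> e.1 = e'.1),
        (forall e e', e \in E -> e' \in E -> e <> e' -> e.1 = e'.1 ->
           col e = col e' -> no_overlap T sigma C e.2 e'.2),
        (size (undup [seq col e | e <- E]) <= OPT)%N &
        (misses T sigma C <= OPT + size E)%N].
Proof.
move=> HC [[O HO <-] _].
have [M [E [col [cc [HM HE HCI Hcost]]]]] := invT HC HO (leqnn T).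
exists E, col; split.
- split; first exact: (e_uniq HE).
  + move=> e /(e_edge HE) [u [u1 /and4P[/andP[a1 a2] _ _ I2] I1 _]].
    move: I1 I2; rewrite /inI => /and3P[/andP[b1 b2] _ _] /and3P[/andP[c1 c2] _ _].
    apply/andP; split; apply/andP; split; lia.
  + by move=> e /(e_edge HE) [u [u1 u2 u3 u4]]; exists u.
  + exact: (e_tgt HE).
- exact: (e_src HE).
- by move=> e e' He He' ne _; apply: (e_ovl HE).
- rewrite /misses -size_filter; apply: uniq_leq_size; first exact: undup_uniq.
  move=> c; rewrite mem_undup => /mapP [e He ->].
  have [h1 h2] := e_col HE He.
  rewrite mem_filter mem_iota; apply/andP; split; [exact: h2|lia].
- lia.
Qed.
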